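(* Let $\Omega\subset\mathbb{R}^n$ be a bounded open set, and let $\varpi,\varpi_1$ be oscillation functions such that $\varpi$ is concave in a neighborhood of the origin and $\lim_{r\to0}\varpi_1(r)/\varpi(r)=0$. Then $D_{\varpi_1}(\overline{\Omega})$ is not dense in $D_{\varpi}(\overline{\Omega})$ (with respect to the norm $\|\cdot\|_{\varpi}$).
   Context: An oscillation function is a real, continuous, non-decreasing function $\varpi$ defined on $[0,R)$ for some $R>0$, with $\varpi(0)=0$ and $\varpi(r)>0$ for $r>0$. For $f\in C(\overline{\Omega})$ and $r>0$ set $\omega_f(r)=\sup\{|f(x)-f(y)|:\ x,y\in\Omega,\ 0<|x-y|\le r\}$. Define $[f]_{\varpi}=\sup_{0<r<R}\omega_f(r)/\varpi(r)$, $D_{\varpi}(\overline{\Omega})=\{f\in C(\overline{\Omega}): [f]_{\varpi}<\infty\}$, with norm $\|f\|_{\varpi}=[f]_{\varpi}+\sup_{\overline{\Omega}}|f|$. Note $D_{\varpi_1}(\overline{\Omega})\subset D_{\varpi}(\overline{\Omega})$ under the hypothesis. *)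

(* Defs.v *)
From HB Require Import structures.
From mathcomp Require Import all_boot all_order all_algebra.
From mathcomp Require Import all_classical all_reals all_analysis.
Set Implicit Arguments. Unset Strict Implicit. Unset Printing Implicit Defensive.
Import Order.TTheory GRing.Theory Num.Theory.
Import numFieldNormedType.Exports.
Local Open Scope classical_set_scope.
Local Open Scope ring_scope.

Definition eucl (R : realType) (n : nat) (x : 'rV[R]_n) : R :=
  Num.sqrt (\sum_(i < n) x ord0 i ^+ 2).

Definition bounded_eucl (R : realType) (n : nat) (A : set 'rV[R]_n) : Prop :=
  exists M : R, forall x, A x -> eucl x <= M.

Definition oscillation_function (R : realType) (R0 : R) (w : R -> R) : Prop :=
  [/\ 0 < R0,
      {within [set r | 0 <= r < R0], continuous w},
      (forall r s, 0 <= r -> r <= s -> s < R0 -> w r <= w s),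
      w 0 = 0 &
      (forall r, 0 < r -> r < R0 -> 0 < w r)].

Definition concave_near0 (R : realType) (w : R -> R) : Prop :=
  exists d : R, 0 < d /\
    forall x y t : R, 0 <= x < d -> 0 <= y < d -> 0 <= t <= 1 ->
      t * w x + (1 - t) * w y <= w (t * x + (1 - t) * y).

Local Open Scope ereal_scope.

Definition osc (R : realType) (n : nat) (Om : set 'rV[R]_n)
    (f : 'rV[R]_n -> R) (r : R) : \bar R :=
  ereal_sup [set e | exists x y, [/\ Om x, Om y,
      (0 < eucl (x - y))%R, (eucl (x - y) <= r)%R & e = (`|f x - f y|)%:E]].

Definition wsemi (R : realType) (n : nat) (Om : set 'rV[R]_n)
    (R0 : R) (w : R -> R) (f : 'rV[R]_n -> R) : \bar R :=
  ereal_sup [set e | exists r : R, [/\ (0 < r)%R, (r < R0)%R &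
      e = osc Om f r * ((w r)^-1)%:E]].

Definition supnorm (R : realType) (n : nat) (Om : set 'rV[R]_n)
    (f : 'rV[R]_n -> R) : \bar R :=
  ereal_sup [set e | exists x, closure Om x /\ e = (`|f x|)%:E].

Definition Dspace (R : realType) (n : nat) (Om : set 'rV[R]_n)
    (R0 : R) (w : R -> R) (f : 'rV[R]_n -> R) : Prop :=
  {within closure Om, continuous f} /\ wsemi Om R0 w f < +oo.

Definition wnorm (R : realType) (n : nat) (Om : set 'rV[R]_n)
    (R0 : R) (w : R -> R) (f : 'rV[R]_n -> R) : \bar R :=
  wsemi Om R0 w f + supnorm Om f.

Definition Ddense (R : realType) (n : nat) (Om : set 'rV[R]_n)
    (R0 : R) (w : R -> R) (R1 : R) (w1 : R -> R) : Prop :=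
  forall f, Dspace Om R0 w f -> forall eps : R, (0 < eps)%R ->
    exists g, Dspace Om R1 w1 g /\ wnorm Om R0 w (fun x => f x - g x)%R < eps%:E.

(* Main.v *)
Require Import Defs.
From HB Require Import structures.
From mathcomp Require Import all_boot all_order all_algebra.
From mathcomp Require Import all_classical all_reals all_analysis.
From mathcomp Require Import ring lra.
Import Order.TTheory GRing.Theory Num.Theory.
Import numFieldNormedType.Exports.
Local Open Scope classical_set_scope.
Local Open Scope ring_scope.
Set Implicit Arguments. Unset Strict Implicit.
Definition clamp (R : realType) (c dl t : R) : R :=
  if t - c <= 0 then 0 else if t - c <= dl then t - c else dl.

Lemma clamp_ge0 (R : realType) (c dl t : R) : 0 <= dl -> 0 <= clamp c dl t.
Proof. move=> h; rewrite /clamp.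
case: (lerP (t - c) 0) => a //; case: (lerP (t - c) dl) => b //; lra. Qed.

Lemma clamp_le (R : realType) (c dl t : R) : 0 <= dl -> clamp c dl t <= dl.
Proof. move=> h; rewrite /clamp.
case: (lerP (t - c) 0) => a //; case: (lerP (t - c) dl) => b //; lra. Qed.

Lemma clamp0 (R : realType) (c dl : R) : clamp c dl c = 0.
Proof. by rewrite /clamp subrr lexx. Qed.

Lemma clampr (R : realType) (c dl r : R) : 0 < r -> r <= dl -> clamp c dl (c + r) = r.
Proof. move=> h1 h2; rewrite /clamp (addrC c) addrK.
by rewrite leNgt h1 /= h2. Qed.

Lemma clamp_lip (R : realType) (c dl s t : R) : 0 <= dl ->
  `|clamp c dl s - clamp c dl t| <= `|s - t|.
Proof.
move=> h; have h1 := ler_norm (s - t); have h2 := ler_norm (t - s).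
rewrite distrC in h2.
rewrite ler_norml /clamp.
case: (lerP (s - c) 0) => a; case: (lerP (t - c) 0) => b;
 try case: (lerP (s - c) dl) => c1; try case: (lerP (t - c) dl) => c2; lra.
Qed.

Lemma w_sub (R : realType) (w : R -> R) (d : R) :
  (forall x y t : R, 0 <= x < d -> 0 <= y < d -> 0 <= t <= 1 ->
      t * w x + (1 - t) * w y <= w (t * x + (1 - t) * y)) ->
  w 0 = 0 -> forall a b, 0 <= b -> b <= a -> a < d -> w a <= w b + w (a - b).
Proof.
move=> conc w0 a b hb hba had.
have [a0|a0] := eqVneq a 0.
  have b0 : b = 0 by apply/eqP; rewrite eq_le hb andbT -a0.
  by rewrite a0 b0 subrr w0 addr0.
have ap : 0 < a by rewrite lt_neqAle eq_sym a0 /= (le_trans hb hba).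
set t := b / a.
have t0 : 0 <= t <= 1.
  apply/andP; split; first by rewrite divr_ge0 // ltW.
  by rewrite ler_pdivrMr // mul1r.
have t1 : 0 <= 1 - t <= 1 by move: t0 => /andP[? ?]; apply/andP; split; lra.
have hA : 0 <= a < d by apply/andP; split; lra.
have h0 : 0 <= (0:R) < d by apply/andP; split; lra.
have e1 := conc a 0 t hA h0 t0.
have e2 := conc a 0 (1 - t) hA h0 t1.
rewrite w0 !mulr0 !addr0 in e1 e2.
have E1 : t * a = b by rewrite /t mulfVK.
have E2 : (1 - t) * a = a - b by rewrite mulrBl mul1r /t mulfVK.
rewrite E1 in e1; rewrite E2 in e2.
have E3 : 1 - (1 - t) = t by rewrite opprB addrC subrK.
lra.
Qed.

Lemma w_dist (R : realType) (w : R -> R) (d : R) :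
  (forall x y t : R, 0 <= x < d -> 0 <= y < d -> 0 <= t <= 1 ->
      t * w x + (1 - t) * w y <= w (t * x + (1 - t) * y)) ->
  w 0 = 0 -> (forall r s, 0 <= r -> r <= s -> s < d -> w r <= w s) ->
  forall a b, 0 <= a < d -> 0 <= b < d -> `|w a - w b| <= w `|a - b|.
Proof.
move=> conc w0 mono a b /andP[a0 ad] /andP[b0 bd].
have [hab|hab] := leP b a.
  rewrite (ger0_norm (_ : 0 <= a - b)) ?subr_ge0 //.
  rewrite ger0_norm ?subr_ge0; last exact: mono.
  have := w_sub conc w0 b0 hab ad; lra.
rewrite distrC (distrC a) (ger0_norm (_ : 0 <= b - a)); last by rewrite subr_ge0 ltW.
rewrite ger0_norm ?subr_ge0; last exact: mono (ltW hab) bd.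
have := w_sub conc w0 a0 (ltW hab) bd; lra.
Qed.

Lemma eucl_coord (R : realType) n (v : 'rV[R]_n) i : `|v ord0 i| <= eucl v.
Proof.
rewrite /eucl -sqrtr_sqr ler_sqrt; last by apply: sumr_ge0 => j _; rewrite sqr_ge0.
rewrite (bigD1 i) //= lerDl; apply: sumr_ge0 => j _; exact: sqr_ge0.
Qed.

Lemma eucl_e (R : realType) n (i0 : 'I_n) (r : R) : 0 <= r ->
  eucl (\row_j (if j == i0 then r else 0)) = r.
Proof.
move=> r0; rewrite /eucl (bigD1 i0) //= big1 ?addr0.
  by rewrite mxE eqxx sqrtr_sqr ger0_norm.
by move=> j /negbTE hj; rewrite mxE hj expr0n.
Qed.

Unset Implicit Arguments. Set Strict Implicit.

Theorem theorem2p7 (R : realType) (n : nat) (Om : set 'rV[R]_n)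
    (R0 : R) (w : R -> R) (R1 : R) (w1 : R -> R) :
  (0 < n)%N -> open Om -> Om !=set0 -> bounded_eucl Om ->
  oscillation_function R0 w -> oscillation_function R1 w1 ->
  concave_near0 w ->
  (fun r => w1 r / w r) @ 0^'+ --> (0 : R) ->
  ~ Ddense Om R0 w R1 w1.
Proof.
move=> n0 oOm [x0 Omx0] _ [R0p wc wmono w0 wpos] [R1p _ _ _ w1pos]
  [d [d0 conc]] lim Hd.
pose i0 := Ordinal n0.
have [e e0 eOm] : exists2 e : R, 0 < e & ball x0 e `<=` Om.
  have : nbhs x0 Om by apply: open_nbhs_nbhs; split.
  by move/nbhs_ballP => [e e0 H]; exists e.
pose dl := Num.min d R0 / 2.
have dl0 : 0 < dl by rewrite divr_gt0 // lt_min d0 R0p.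
have dld : dl < d.
  have : Num.min d R0 <= d by rewrite ge_min lexx.
  rewrite /dl; lra.
have dlR : dl < R0.
  have : Num.min d R0 <= R0 by rewrite ge_min lexx orbT.
  rewrite /dl; lra.
pose c := x0 ord0 i0.
pose h := fun x : 'rV[R]_n => clamp c dl (x ord0 i0).
pose f := fun x => w (h x).
have hA : forall x, 0 <= h x < R0.
  move=> x; rewrite clamp_ge0 ?ltW //=; exact: le_lt_trans (clamp_le _ _ (ltW dl0)) dlR.
pose D := Num.min d R0.
have DR : D <= R0 by rewrite ge_min lexx orbT.
have Dd : D <= d by rewrite ge_min lexx.
have D0 : 0 < D by rewrite /D lt_min d0 R0p.
have dlD : dl < D by rewrite /dl -/D; lra.
have concD : forall x y t : R, 0 <= x < D -> 0 <= y < D -> 0 <= t <= 1 ->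
      t * w x + (1 - t) * w y <= w (t * x + (1 - t) * y).
  move=> x y t /andP[x0' xD] /andP[y0 yD] t01; apply: conc => //; apply/andP; split => //; lra.
have hd : forall x, 0 <= h x < D.
  move=> x; rewrite clamp_ge0 ?ltW //=; exact: le_lt_trans (clamp_le _ _ (ltW dl0)) dlD.
have fbound : forall x y r, eucl (x - y) <= r -> r < R0 -> `|f x - f y| <= w r.
  move=> x y r exy rR.
  have monoD : forall a b, 0 <= a -> a <= b -> b < D -> w a <= w b.
    move=> a b a0 ab bd; apply: wmono => //; lra.
  have H := w_dist concD w0 monoD (hd x) (hd y).
  rewrite /f. eapply le_trans; [exact H|].
  apply: (wmono _ _ (normr_ge0 _)) => //.
  apply: (le_trans (clamp_lip _ _ _ (ltW dl0))).
  apply: (le_trans _ exy).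
  have := eucl_coord (x - y) i0; rewrite !mxE; exact.
have hcont : continuous h.
  move=> x P /= /nbhs_ballP [eps eps0 HP].
  apply/nbhs_ballP; exists eps => // z [_ Hz]; apply: HP.
  have := Hz ord0 i0; rewrite -!ball_normE /ball_ /= => Hb.
  exact: le_lt_trans (clamp_lip _ _ _ (ltW dl0)) Hb.
have fcont : continuous f.
  move=> x.
  have Ax : [set r | 0 <= r < R0] (h x) by exact: hA.
  have wcx : w @ within [set r | 0 <= r < R0] (nbhs (h x)) --> w (h x).
    rewrite nbhs_subspace_in //; exact: wc.
  have hx : h @ (nbhs x) --> within [set r | 0 <= r < R0] (nbhs (h x)).
    move=> P HP.
    have /nbhs_ballP [eps eps0 He] := hcont x _ HP.
    apply/nbhs_ballP; exists eps => // y /He /=; apply; exact: hA.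
  exact: (cvg_comp h w hx wcx).
have Df : Dspace Om R0 w f.
  split; first exact: continuous_subspaceT.
  apply: (@le_lt_trans _ _ 1%E); last exact: ltry.
  apply: ge_ereal_sup => _ [r [r0 rR ->]].
  have wr0 := wpos r r0 rR.
  have : (osc Om f r <= (w r)%:E)%E.
    apply: ge_ereal_sup => _ [x [y [_ _ _ exy ->]]].
    rewrite lee_fin; exact: fbound.
  move/(lee_wpmul2r (_ : (0 <= ((w r)^-1)%:E)%E)).
  rewrite -EFinM mulfV ?gt_eqF //; apply.
  by rewrite lee_fin invr_ge0 ltW.
have half0 : (0:R) < 1 / 2 by lra.
move: (Hd f Df (1/2) half0) => [g [[_ Gfin] Hlt]].
have [K [K0 HK]] : exists K : R, 0 <= K /\ (wsemi Om R1 w1 g <= K%:E)%E.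
  move: Gfin; case: (wsemi Om R1 w1 g) => [r _| //|_].
  - by exists `|r|; split => //; rewrite lee_fin ler_norm.
  - by exists 0; split => //; exact: leNye.
have gbound : forall x y r, Om x -> Om y -> 0 < eucl (x - y) -> eucl (x - y) <= r ->
    0 < r -> r < R1 -> `|g x - g y| <= K * w1 r.
  move=> x y r Ox Oy exy0 exy r0 rR1.
  have w1r := w1pos r r0 rR1.
  have H1 : ((`|g x - g y|)%:E <= osc Om g r)%E.
    by apply: ereal_sup_ubound; exists x, y; split.
  have H2 : (osc Om g r * ((w1 r)^-1)%:E <= wsemi Om R1 w1 g)%E.
    by apply: ereal_sup_ubound; exists r; split.
  have iv : (0 <= ((w1 r)^-1)%:E)%E by rewrite lee_fin invr_ge0 ltW.
  have H3 := lee_wpmul2r iv H1.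
  have := le_trans H3 (le_trans H2 HK).
  by rewrite -EFinM lee_fin ler_pdivrMr.
pose eps := (2 * (K + 1))^-1.
have eps0 : 0 < eps by rewrite invr_gt0; lra.
have [r [[r0 re rdl rR0 rR1] rl]] : exists r, [/\ 0 < r, r < e, r < dl, r < R0 & r < R1]
    /\ `|0 - w1 r / w r| < eps.
  near (0:R)^'+ => r.
  exists r; split; first split.
  - near: r; exact: nbhs_right_gt.
  - near: r; exact: nbhs_right_lt e0.
  - near: r; exact: nbhs_right_lt dl0.
  - near: r; exact: nbhs_right_lt R0p.
  - near: r; exact: nbhs_right_lt R1p.
  - near: r; exact: (cvgr_dist_lt _ _ lim eps eps0).
  Unshelve. all: try by end_near.
have wr0 := wpos r r0 rR0.
have w1r0 := w1pos r r0 rR1.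
pose x1 := x0 + \row_j (if j == i0 then r else 0).
have x1Om : Om x1.
  apply: eOm; split => // i j; rewrite -ball_normE /ball_ /= !mxE.
  rewrite opprD addrA subrr add0r normrN.
  by case: ifP => _; rewrite ?normr0 // ger0_norm // ltW.
have ex : eucl (x1 - x0) = r by rewrite /x1 [x0 + _]addrC addrK eucl_e // ltW.
have fx1 : f x1 = w r by rewrite /f /h /x1 !mxE eqxx -/c clampr // ltW.
have fx0 : f x0 = 0 by rewrite /f /h clamp0 w0.
have gb : `|g x1 - g x0| <= K * w1 r by apply: gbound => //; rewrite ex.
have hw : w r / 2 <= `|(f x1 - g x1) - (f x0 - g x0)|.
  rewrite sub0r normrN in rl.
  have q1 : w1 r / w r < eps by apply: le_lt_trans (ler_norm _) rl.
  rewrite ltr_pdivrMr // in q1.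
  have q2 : (K + 1) * (eps * w r) = w r / 2.
    have K1 : K + 1 != 0 by rewrite gt_eqF //; lra.
    by rewrite /eps; field.
  have q3 : K * w1 r <= w r / 2.
    rewrite -q2; apply: le_trans (_ : (K + 1) * w1 r <= _).
      by rewrite mulrDl mul1r lerDl ltW.
    by rewrite ler_pM2l ?ltW //; lra.
  have := ler_norm (f x1 - g x1 - (f x0 - g x0)).
  have := ler_norm (g x1 - g x0).
  rewrite fx1 fx0; lra.
have H1 : ((`|(f x1 - g x1) - (f x0 - g x0)|%R)%:E
    <= osc Om (fun x => (f x - g x)%R) r)%E.
  by apply: ereal_sup_ubound; exists x1, x0; split => //; rewrite ex.
have H2 : (osc Om (fun x => (f x - g x)%R) r * ((w r)^-1)%:E
    <= wsemi Om R0 w (fun x => (f x - g x)%R))%E.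
  by apply: ereal_sup_ubound; exists r; split.
have iv : (0 <= ((w r)^-1)%:E)%E by rewrite lee_fin invr_ge0 ltW.
have H3 := le_trans (lee_wpmul2r iv H1) H2.
have H4 : ((1 / 2)%:E <= wsemi Om R0 w (fun x => (f x - g x)%R))%E.
  apply: le_trans H3; rewrite -EFinM lee_fin ler_pdivlMr //.
  by move: hw; rewrite mulrC mul1r.
have H5 : (0 <= supnorm Om (fun x => (f x - g x)%R))%E.
  apply: le_trans (_ : ((`|f x0 - g x0|%R)%:E <= _)%E).
    by rewrite lee_fin normr_ge0.
  apply: ereal_sup_ubound; exists x0; split => //; exact: subset_closure.
have := lt_le_trans Hlt (lee_paddr H5 H4).
by rewrite ltxx.
Qed.
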